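(* Let $\beta\in\mathbb{Z}[\mathrm{i}]$ with $|\beta|>1$, let $(\beta,D)$ be an integral numeration system and let $D'\subset\mathbb{Z}[\mathrm{i}]$ be a finite set with $D\subseteq D'$. Then a configuration $(a_z)_{z\in\mathbb{Z}[\mathrm{i}]}$ is $(\beta,D)$-automatic if and only if it is $(\beta,D')$-automatic, i.e. generated by a DFAO with input alphabet $D'$ that is consistent (any two words over $D'$ with the same value $[\cdot]_\beta$ give the same output).
   Context: For $\gamma\in\mathbb{Z}[\mathrm{i}]$ with $|\gamma|>1$ and a finite $D\subset\mathbb{Z}[\mathrm{i}]$ with $0\in D$, a word $w=w_{n-1}\cdots w_0\in D^*$ has value $[w]_\gamma=\sum_{j=0}^{n-1}w_j\gamma^j$; $w$ is a $(\gamma,D)$-expansion of $z$ if $[w]_\gamma=z$. $(\gamma,D)$ is an integral numeration system if every Gaussian integer has a unique $(\gamma,D)$-expansion (up to leading zeros). A DFAO $(S,D,\delta,s_0,A,\tau)$ has finite state set $S$, input alphabet $D$, transition map $\delta:S\times D\to S$ extended to words by $\delta(s,wa)=\delta(\delta(s,w),a)$, initial state $s_0$, output map $\tau:S\to A$. If every $z\in\mathbb{Z}[\mathrm{i}]$ has at least one $(\gamma,D)$-expansion, a configuration $(a_z)$ (map from $\mathbb{Z}[\mathrm{i}]$ to a finite set) is $(\gamma,D)$-automatic if there is a DFAO with input alphabet $D$ such that $a_z=\tau(\delta(s_0,w))$ for every $w\in D^*$ with $[w]_\gamma=z$. *)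

(* Defs.v *)
(* Gaussian integers are modelled as the elements z of algC
   (algebraic complex numbers) with integral real and imaginary parts. *)
From HB Require Import structures.
From mathcomp Require Import all_boot all_order all_algebra all_field.
Set Implicit Arguments. Unset Strict Implicit. Unset Printing Implicit Defensive.
Import Order.TTheory GRing.Theory Num.Theory.
Local Open Scope ring_scope.

Definition gaussian (z : algC) : bool :=
  ('Re z \is a Num.int) && ('Im z \is a Num.int).

(* A word w = w_{n-1} ... w_0 is the sequence [:: w_{n-1}; ...; w_0]
   (read left to right by the automaton). Its value is sum_j w_j gamma^j. *)
Definition wval (gamma : algC) (w : seq algC) : algC :=
  \sum_(j < size w) nth 0 (rev w) j * gamma ^+ j.

Definition word_over (D : seq algC) (w : seq algC) : bool := all (mem D) w.

Definition strip0 (w : seq algC) : seq algC :=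
  drop (find (fun d => d != 0) w) w.

Definition integral_numeration (gamma : algC) (D : seq algC) : Prop :=
  (forall z, gaussian z -> exists w, word_over D w /\ wval gamma w = z) /\
  (forall w1 w2, word_over D w1 -> word_over D w2 ->
     wval gamma w1 = wval gamma w2 -> strip0 w1 = strip0 w2).

(* (gamma, D)-automatic configuration a : Z[i] -> A (values of a outside the
   Gaussian integers are irrelevant). *)
Definition automatic (gamma : algC) (D : seq algC) (A : finType)
    (a : algC -> A) : Prop :=
  exists (S : finType) (s0 : S) (delta : S -> algC -> S) (tau : S -> A),
    forall w, word_over D w -> a (wval gamma w) = tau (foldl delta s0 w).

(* Main.v *)
Require Import Defs.
From HB Require Import structures.
From mathcomp Require Import all_boot all_order all_algebra all_field.
From mathcomp Require Import zify ring lra.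
Import Order.TTheory GRing.Theory Num.Theory.
Local Open Scope ring_scope.

Lemma wval_nil g : wval g [::] = 0.
Proof. by rewrite /wval big_ord0. Qed.

Lemma wval_rcons g w x : wval g (rcons w x) = wval g w * g + x.
Proof.
rewrite /wval size_rcons big_ord_recl rev_rcons /= expr0 mulr1 addrC.
congr (_ + _); rewrite mulr_suml; apply: eq_bigr => i _.
by rewrite /bump /= add1n exprSr mulrA.
Qed.

Lemma gaussianP z : gaussian z <->
  exists k l : int, z = k%:~R + 'i * l%:~R.
Proof.
split.
  case/andP=> /intrP[k hk] /intrP[l hl]; exists k, l.
  by rewrite {1}(algCrect z) hk hl.
case=> k [l ->]; rewrite /gaussian Re_rect ?Im_rect ?Rreal_int ?intr_int //.
Qed.

Lemma gaussD x y : gaussian x -> gaussian y -> gaussian (x + y).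
Proof.
case/andP=> h1 h2 /andP[h3 h4]; rewrite /gaussian !raddfD /=.
by rewrite rpredD // rpredD.
Qed.

Lemma gaussM x y : gaussian x -> gaussian y -> gaussian (x * y).
Proof.
case/gaussianP=> [k [l ->]] /gaussianP [m [n ->]].
apply/gaussianP; exists (k * m - l * n), (k * n + l * m).
have e : forall a b c d : algC, (a + 'i * b) * (c + 'i * d)
   = (a * c - b * d) + 'i * (a * d + b * c).
  move=> a b c d.
  have -> : (a + 'i * b) * (c + 'i * d) =
     a * c + 'i * (a * d + b * c) + 'i ^+ 2 * (b * d) by ring.
  rewrite sqrCi; ring.
by rewrite e !rmorphB !rmorphD /= !rmorphM.
Qed.

Lemma gauss0 : gaussian 0.
Proof. by apply/gaussianP; exists 0, 0; rewrite mulr0 addr0. Qed.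

Lemma gauss_wval g w : gaussian g -> all gaussian w -> gaussian (wval g w).
Proof.
move=> hg; elim/last_ind: w => [|w x IH]; first by rewrite wval_nil gauss0.
rewrite all_rcons => /andP[hx hw]; rewrite wval_rcons.
by apply: gaussD => //; apply: gaussM => //; apply: IH.
Qed.

Lemma norm_le_sum (s : seq algC) x : x \in s -> `|x| <= \sum_(y <- s) `|y|.
Proof.
elim: s => // y s IH; rewrite inE big_cons => /orP[/eqP->|h].
  by rewrite lerDl sumr_ge0.
by apply: le_trans (IH h) _; rewrite lerDr.
Qed.

Definition ints (M : nat) : seq int := [seq (n%:Z - M%:Z)%R | n <- iota 0 (M + M).+1].
Definition box (M : nat) : seq algC :=
  [seq (k%:~R + 'i * l%:~R) | k <- ints M, l <- ints M].

Lemma ints_mem M (k : int) : (- (M%:Z) <= k)%R -> (k <= M%:Z)%R -> k \in ints M.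
Proof.
move=> h1 h2; apply/mapP; exists (absz (k + M%:Z)).
  rewrite mem_iota /= add0n ltnS; lia.
lia.
Qed.




Lemma box_gauss M z : z \in box M -> gaussian z.

Proof. by case/allpairsP=> [[k l] [_ _ ->]]; apply/gaussianP; exists k, l. Qed.

Lemma box_mem M z : gaussian z -> `|z| <= M%:R -> z \in box M.
Proof.
case/gaussianP=> [k [l ez]] hz.
have h0 : 0 <= `|z| by [].
have h2 : `|z| * `|z| <= M%:R * M%:R by apply: ler_pM.
have : `|z| ^+ 2 = (k * k + l * l)%:~R.
  rewrite normC2_Re_Im ez Re_rect ?Im_rect ?Rreal_int ?intr_int //.
  by rewrite !expr2 rmorphD /= !rmorphM.
rewrite expr2 => e; rewrite e -natrM in h2.
have h3 : ((k * k + l * l) <= ((M * M)%N)%:Z)%R by rewrite -(ler_int algC).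
rewrite ez; apply/allpairsP; exists (k, l); split => //; apply: ints_mem => /=; nia.
Qed.
Lemma divD (beta : algC) (D : seq algC) : 0 \in D ->
  (forall z, gaussian z -> exists w, word_over D w /\ wval beta w = z) ->
  all gaussian D -> gaussian beta ->
  forall z, gaussian z -> exists q e, [/\ e \in D, gaussian q & z = q * beta + e].
Proof.
move=> h0 hs hD hb z /hs [w [hw <-]].
case/lastP: w hw => [|u e] hw.
  by exists 0, 0; rewrite wval_nil mul0r addr0; split=> //; apply: gauss0.
move: hw; rewrite /word_over all_rcons => /andP[he hu].
exists (wval beta u), e; split => //; last by rewrite wval_rcons.
apply: gauss_wval => //; apply/allP => x hx.
exact: (allP hD) x (allP hu x hx).
Qed.

Lemma carries (beta : algC) (D D' : seq algC) :
  gaussian beta -> 1 < `|beta| -> all gaussian D -> 0 \in D ->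
  (forall z, gaussian z -> exists w, word_over D w /\ wval beta w = z) ->
  all gaussian D' ->
  exists cs : seq algC, [/\ 0 \in cs, all gaussian cs &
    forall c d, c \in cs -> d \in D' ->
      exists2 q, q \in cs & has (fun e => d + c == q * beta + e) D].
Proof.
move=> hb hb1 hD h0 hs hD'.
pose K := \sum_(y <- D') `|y| + \sum_(y <- D) `|y|.
pose b := `|beta|.
have Kge0 : 0 <= K by rewrite addr_ge0 ?sumr_ge0.
have b1 : 0 < b - 1 by rewrite subr_gt0.
have [M hM] : exists M : nat, K / (b - 1) < M%:R.
  by exists (Num.Def.archi_bound (K / (b - 1))); apply: archi_boundP; rewrite divr_ge0 // ltW.
rewrite ltr_pdivrMr // in hM.
exists [seq z <- box M | `|z| <= M%:R]; split.
- by rewrite mem_filter normr0 ler0n box_mem ?gauss0 ?normr0 ?ler0n.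
- by apply/allP => z; rewrite mem_filter => /andP[_ /box_gauss].
move=> c d; rewrite mem_filter => /andP[hcb hc] hd.
have gc := box_gauss _ _ hc.
have gd : gaussian d by apply: (allP hD').
have [q [e [he gq eq]]] := divD _ _ h0 hs hD hb _ (gaussD _ _ gd gc).
exists q; last by apply/hasP; exists e => //; apply/eqP.
have hqb : `|q| * b <= M%:R * b.
  have -> : `|q| * b = `|d + c - e| by rewrite /b -normrM eq addrK.
  apply: le_trans (ler_normB _ _) _.
  apply: le_trans (lerD (ler_normD _ _) (lexx _)) _.
  have hd1 := norm_le_sum _ _ hd; have he1 := norm_le_sum _ _ he.
  apply: (@le_trans _ _ ((\sum_(y <- D') `|y| + M%:R) + \sum_(y <- D) `|y|)).
    exact: lerD (lerD hd1 hcb) he1.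
  have -> : M%:R * b = M%:R * (b - 1) + M%:R by ring.
  apply: le_trans (lerD (ltW hM) (lexx (M%:R))).
  by rewrite -!addrA lerD2l addrC.
rewrite ler_pM2r ?(lt_trans ltr01) // in hqb.
by rewrite mem_filter hqb box_mem.
Qed.

Theorem proposition2p7 (beta : algC) (D D' : seq algC) (A : finType)
    (a : algC -> A) :
  gaussian beta -> 1 < `|beta| ->
  all gaussian D -> 0 \in D -> integral_numeration beta D ->
  all gaussian D' -> {subset D <= D'} ->
  automatic beta D a <-> automatic beta D' a.
Proof.
move=> hb hb1 hD h0 [hs _] hD' hsub; split; last first.
  case=> S [s0 [delta [tau H]]]; exists S, s0, delta, tau => w hw; apply: H.
  by apply/allP => x hx; apply: hsub; exact: (allP hw) x hx.
case=> S [s0 [delta [tau H]]].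
have [cs [cs0 csg csc]] := carries _ _ _ hb hb1 hD h0 hs hD'.
pose N := size cs.
have hx : forall i : 'I_N, exists w, word_over D w && (wval beta w == cs`_i).
  move=> i; have gi : gaussian cs`_i by apply: (allP csg); apply: mem_nth.
  by have [w [hw e]] := hs _ gi; exists w; rewrite hw e eqxx.
pose P (c d : algC) := fun q => has (fun e => d + c == q * beta + e) D.
pose jf c d := find (P c d) cs.
pose ef c d := nth 0 D (find (fun e => d + c == cs`_(jf c d) * beta + e) D).
pose S' := {ffun 'I_N -> S}.
pose s0' : S' := [ffun i : 'I_N => foldl delta s0 (xchoose (hx i))].
pose delta' (T : S') d : S' :=
  [ffun i : 'I_N => delta (T (insubd i (jf (cs`_i) d))) (ef (cs`_i) d)].
have i0lt : (index (0 : algC)%R cs < N)%N by rewrite index_mem.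
pose i0 : 'I_N := Ordinal i0lt.
pose tau' (T : S') := tau (T i0).
exists S', s0', delta', tau'.
have inv : forall u, word_over D' u -> forall i : 'I_N, exists y,
    [/\ word_over D y, wval beta y = wval beta u + cs`_i &
        foldl delta' s0' u i = foldl delta s0 y].
  elim/last_ind => [|u d IH].
    move=> _ i; exists (xchoose (hx i)); have /andP[h1 /eqP h2] := xchooseP (hx i).
    by rewrite wval_nil add0r ffunE.
  rewrite /word_over all_rcons => /andP[hd hu] i.
  have ci : cs`_i \in cs by apply: mem_nth.
  set c := cs`_i in ci *.
  have [q hq hP] := csc c d ci hd.
  have hh : has (P c d) cs by apply/hasP; exists q.
  have jlt : (jf c d < N)%N by rewrite -has_find.
  have Pj := nth_find 0 hh.
  have eD : ef c d \in D by rewrite mem_nth // -has_find.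
  have eeq : d + cs`_i = cs`_(jf c d) * beta + ef c d
    by apply/eqP; exact: (nth_find 0 Pj).
  have [y [hy ey fy]] := IH hu (insubd i (jf c d)).
  have vj : val (insubd i (jf c d)) = jf c d by rewrite val_insubd jlt.
  exists (rcons y (ef c d)); split.
  - by rewrite /word_over all_rcons; apply/andP; split.
  - by rewrite !wval_rcons ey vj mulrDl -addrA -eeq addrA.
  - by rewrite !foldl_rcons ffunE fy.
move=> w hw; have [y [hy ey fy]] := inv w hw i0.
by rewrite /tau' fy -H // ey /= (nth_index 0 cs0) addr0.
Qed.
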